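(* Let $G$ be a profinite group satisfying the maximum condition on closed subgroups. The following are equivalent: (i) every isolated orbital closed subgroup of $G$ is normal in $G$; (ii) every orbital closed subgroup $K$ of $G$ contains a subgroup $N$ of finite index in $K$ which is normal in $G$.
   Context: A closed subgroup $K$ of a profinite group $G$ is orbital if $\mathbf{N}_G(K)$ is open in $G$. An orbital closed subgroup $H$ is isolated orbital if for every orbital closed subgroup $H'$ of $G$ with $H\lneq H'\le G$ we have $[H':H]=\infty$. *)

(* Defs.v *)
From Stdlib Require Import List.

Record ProfiniteGroup := {
  car :> Type;
  mul : car -> car -> car;
  inv : car -> car;
  one : car;
  mulA : forall x y z, mul x (mul y z) = mul (mul x y) z;
  mul1g : forall x, mul one x = x;
  mulVg : forall x, mul (inv x) x = one;
  is_open : (car -> Prop) -> Prop;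
  open_full : is_open (fun _ => True);
  open_inter : forall U V, is_open U -> is_open V ->
      is_open (fun x => U x /\ V x);
  open_union : forall F : (car -> Prop) -> Prop,
      (forall U, F U -> is_open U) -> is_open (fun x => exists U, F U /\ U x);
  (* (x, y) |-> x * y^-1 is continuous for the product topology *)
  mul_inv_cont : forall U x y, is_open U -> U (mul x (inv y)) ->
      exists V W, is_open V /\ is_open W /\ V x /\ W y /\
        (forall a b, V a -> W b -> U (mul a (inv b)));
  compact : forall F : (car -> Prop) -> Prop,
      (forall U, F U -> is_open U) ->
      (forall x, exists U, F U /\ U x) ->
      exists l : list (car -> Prop), (forall U, In U l -> F U) /\
        (forall x, exists U, In U l /\ U x);
  hausdorff : forall x y, x <> y ->
      exists U V, is_open U /\ is_open V /\ U x /\ V y /\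
        (forall z, U z -> V z -> False);
  (* totally disconnected: connected subsets have at most one point *)
  totally_disconnected : forall S : car -> Prop,
      (forall U V, is_open U -> is_open V ->
         (forall x, S x -> U x \/ V x) ->
         (exists x, S x /\ U x) -> (exists x, S x /\ V x) ->
         exists x, S x /\ U x /\ V x) ->
      forall x y, S x -> S y -> x = y
}.

Section Defs.
Variable G : ProfiniteGroup.

Definition is_closed (A : G -> Prop) : Prop := is_open G (fun x => ~ A x).

Definition is_subgroup (H : G -> Prop) : Prop :=
  H (one G) /\ (forall x y, H x -> H y -> H (mul G x y)) /\
  (forall x, H x -> H (inv G x)).

Definition closed_subgroup (H : G -> Prop) : Prop :=
  is_subgroup H /\ is_closed H.

Definition subset (A B : G -> Prop) : Prop := forall x, A x -> B x.

Definition normalizer (K : G -> Prop) : G -> Prop :=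
  fun g => forall x, K x <-> K (mul G (inv G g) (mul G x g)).

Definition normal (H : G -> Prop) : Prop :=
  forall g x, H x -> H (mul G g (mul G x (inv G g))).

Definition orbital (K : G -> Prop) : Prop :=
  closed_subgroup K /\ is_open G (normalizer K).

(* [K : H] finite (for H <= K): finitely many left cosets of H cover K *)
Definition finite_index (H K : G -> Prop) : Prop :=
  exists l : list G, (forall g, In g l -> K g) /\
    forall x, K x -> exists g, In g l /\ H (mul G (inv G g) x).

Definition isolated_orbital (H : G -> Prop) : Prop :=
  orbital H /\
  forall H', orbital H' -> subset H H' -> (exists x, H' x /\ ~ H x) ->
    ~ finite_index H H'.

Definition max_condition : Prop :=
  forall S : (G -> Prop) -> Prop,
    (forall H, S H -> closed_subgroup H) -> (exists H, S H) ->
    exists M, S M /\ forall H, S H -> subset M H -> subset H M.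

End Defs.

(* Main.v *)
Require Import Defs.
From Stdlib Require Import List Lia Arith Classical FunctionalExtensionality PropExtensionality IndefiniteDescription.
Import ListNotations.

Section Aux.
Variable G : ProfiniteGroup.
Local Notation "x * y" := (mul G x y).
Local Notation inv := (inv G).
Local Notation one := (one G).

Lemma gA x y z : x * (y * z) = (x * y) * z. Proof. apply mulA. Qed.
Lemma g1l x : one * x = x. Proof. apply mul1g. Qed.
Lemma gVl x : inv x * x = one. Proof. apply mulVg. Qed.
Lemma gVr x : x * inv x = one.
Proof.
  rewrite <- (g1l (x * inv x)).
  rewrite <- (gVl (inv x)) at 1.
  rewrite <- gA. rewrite (gA (inv x) x (inv x)). rewrite gVl, g1l. apply gVl.
Qed.
Lemma g1r x : x * one = x.
Proof. rewrite <- (gVl x), gA, gVr, g1l. reflexivity. Qed.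
Lemma gii x : inv (inv x) = x.
Proof.
  rewrite <- (g1r (inv (inv x))), <- (gVl x), gA, gVl, g1l. reflexivity.
Qed.
Lemma gKr x y : (x * y) * inv y = x.
Proof. rewrite <- gA, gVr, g1r. reflexivity. Qed.
Lemma gKVr x y : (x * inv y) * y = x.
Proof. rewrite <- gA, gVl, g1r. reflexivity. Qed.
Lemma ginvM x y : inv (x * y) = inv y * inv x.
Proof.
  assert (E : (x * y) * (inv y * inv x) = one).
  { rewrite gA, gKr, gVr. reflexivity. }
  rewrite <- (g1r (inv (x * y))), <- E, gA, gVl, g1l. reflexivity.
Qed.
Lemma ginv1 : inv one = one.
Proof. rewrite <- (g1r (inv one)). apply gVl. Qed.

Ltac gsimpl := repeat progress (rewrite ?gA, ?ginvM, ?gii, ?ginv1, ?gKr, ?gKVr, ?gVl, ?gVr, ?g1l, ?g1r).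


Lemma open_ext (U V : G -> Prop) : is_open G U -> (forall x, U x <-> V x) -> is_open G V.
Proof.
  intros HU HE. replace V with U; auto.
  apply functional_extensionality; intro x. apply propositional_extensionality. apply HE.
Qed.

Lemma open_local (U : G -> Prop) :
  (forall x, U x -> exists V, is_open G V /\ V x /\ forall z, V z -> U z) -> is_open G U.
Proof.
  intro H.
  pose proof (open_union G (fun V => is_open G V /\ forall z, V z -> U z)) as Hu.
  eapply open_ext. apply Hu. intros V [HV _]; exact HV.
  intro x; split.
  - intros [V [[_ HV] Vx]]. auto.
  - intro Ux. destruct (H x Ux) as [V [HV [Vx HVU]]]. exists V; auto.
Qed.

Lemma open_rmul (U : G -> Prop) a : is_open G U -> is_open G (fun x => U (x * inv a)).
Proof.
  intro HU. apply open_local. intros x Hx.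
  destruct (mul_inv_cont G U x a HU Hx) as [V [W [HV [HW [Vx [Wa HVW]]]]]].
  exists V; split; auto.
Qed.

Lemma open_inv (U : G -> Prop) : is_open G U -> is_open G (fun x => U (inv x)).
Proof.
  intro HU. apply open_local. intros x Hx.
  assert (Hx' : U (one * inv x)) by (rewrite g1l; exact Hx).
  destruct (mul_inv_cont G U one x HU Hx') as [V [W [HV [HW [Vx [Wa HVW]]]]]].
  exists W; split; auto. split; auto. intros z Wz. rewrite <- g1l. apply HVW; auto.
Qed.

Lemma open_lmul (U : G -> Prop) a : is_open G U -> is_open G (fun x => U (a * x)).
Proof.
  intro HU. apply open_local. intros x Hx.
  assert (Hx' : U (a * inv (inv x))) by (rewrite gii; exact Hx).
  destruct (mul_inv_cont G U a (inv x) HU Hx') as [V [W [HV [HW [Vx [Wa HVW]]]]]].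
  exists (fun z => W (inv z)). split. apply open_inv; auto. split; auto.
  intros z Wz. rewrite <- (gii z). apply HVW; auto.
Qed.

Lemma open_forall_list (P : G -> G -> Prop) (l : list G) :
  (forall w, In w l -> is_open G (P w)) -> is_open G (fun x => forall w, In w l -> P w x).
Proof.
  induction l as [|a l IH]; intro H.
  - eapply open_ext. apply open_full. intro x; split; auto. intros _ w [].
  - eapply open_ext. apply open_inter. apply (H a); simpl; auto. apply IH. intros; apply H; simpl; auto.
    intro x; simpl; split.
    + intros [Ha Hl] w [<-|Hw]; auto.
    + intro Hw; split; auto.
Qed.

Definition cj (g x : G) : G := g * (x * inv g).
Definition prod (l : list G) : G := fold_right (mul G) one l.

Lemma prod_app l1 l2 : prod (l1 ++ l2) = prod l1 * prod l2.
Proof. induction l1; simpl. rewrite g1l; auto. rewrite IHl1, gA; auto. Qed.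

Lemma cj_mul g x y : cj g (x * y) = cj g x * cj g y.
Proof. unfold cj. gsimpl. reflexivity. Qed.
Lemma cj_inv g x : cj g (inv x) = inv (cj g x).
Proof. unfold cj. gsimpl. reflexivity. Qed.
Lemma cj_one g : cj g one = one.
Proof. unfold cj. gsimpl. reflexivity. Qed.
Lemma cj_cj g h x : cj g (cj h x) = cj (g * h) x.
Proof. unfold cj. gsimpl. reflexivity. Qed.
Lemma cj_1 x : cj one x = x.
Proof. unfold cj. gsimpl. reflexivity. Qed.
Lemma cj_Vcj g x : cj (inv g) (cj g x) = x.
Proof. unfold cj. gsimpl. reflexivity. Qed.
Lemma cj_cjV g x : cj g (cj (inv g) x) = x.
Proof. unfold cj. gsimpl. reflexivity. Qed.
Lemma prod_cj g l : prod (map (cj g) l) = cj g (prod l).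
Proof. induction l; simpl. rewrite cj_one; auto. rewrite IHl, cj_mul; auto. Qed.
Lemma prod_rev_inv l : prod (rev (map inv l)) = inv (prod l).
Proof. induction l; simpl. rewrite ginv1; auto. rewrite prod_app, IHl; simpl. gsimpl. reflexivity. Qed.
Lemma prod_repeat_cj g t k : prod (repeat (cj g t) k) = cj g (prod (repeat t k)).
Proof. induction k; simpl. rewrite cj_one; auto. rewrite IHk, cj_mul; auto. Qed.

Lemma list_choice {A B : Type} (Q : A -> B -> Prop) (l : list A) :
  (forall r, In r l -> exists p, Q r p) ->
  exists lp, (forall p, In p lp -> exists r, In r l /\ Q r p) /\
             (forall r, In r l -> exists p, In p lp /\ Q r p).
Proof.
  induction l as [|a l IH]; intro H.
  - exists nil; split; simpl; tauto.
  - destruct (H a (or_introl eq_refl)) as [pa Hpa].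
    destruct IH as [lp [H1 H2]]. intros; apply H; simpl; auto.
    exists (pa :: lp); split.
    + intros p [<-|Hp]. exists a; simpl; auto. destruct (H1 p Hp) as [r [? ?]]; exists r; simpl; auto.
    + intros r [<-|Hr]. exists pa; simpl; auto. destruct (H2 r Hr) as [p [? ?]]; exists p; simpl; auto.
Qed.

Lemma fi_ext (A A' Q : G -> Prop) : finite_index G A Q -> (forall x, A x <-> A' x) -> finite_index G A' Q.
Proof.
  intros [l [H1 H2]] HE. exists l; split; auto.
  intros x Qx. destruct (H2 x Qx) as [g [? ?]]. exists g; split; auto. apply HE; auto.
Qed.

Lemma fi_refl (K : G -> Prop) : is_subgroup G K -> finite_index G K K.
Proof.
  intros [K1 _]. exists [one]; split. intros g [<-|[]]; auto.
  intros x Kx. exists one; split; simpl; auto. rewrite ginv1, g1l; auto.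
Qed.

Lemma fi_trans (K M H : G -> Prop) : is_subgroup G H -> subset G M H ->
  finite_index G K M -> finite_index G M H -> finite_index G K H.
Proof.
  intros [H1 [HM HI]] sMH [l1 [A1 B1]] [l2 [A2 B2]].
  exists (flat_map (fun a => map (fun b => a * b) l1) l2); split.
  - intros g Hg. apply in_flat_map in Hg as [a [Ha Hb]]. apply in_map_iff in Hb as [b [<- Hb]].
    apply HM; auto.
  - intros x Hx. destruct (B2 x Hx) as [a [Ha Ma]]. destruct (B1 _ Ma) as [b [Hb Kb]].
    exists (a * b); split. apply in_flat_map. exists a; split; auto. apply in_map; auto.
    rewrite ginvM, <- gA; auto.
Qed.

Lemma fi_inter (A B Q : G -> Prop) : is_subgroup G A -> is_subgroup G B -> Q one ->
  finite_index G A Q -> finite_index G B Q -> finite_index G (fun x => A x /\ B x) Q.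
Proof.
  intros [A1 [AM AI]] [B1 [BM BI]] Q1 [la [HA1 HA2]] [lb [HB1 HB2]].
  destruct (list_choice (fun (r : G * G) p => Q p /\
     ((exists p', Q p' /\ A (inv (fst r) * p') /\ B (inv (snd r) * p')) ->
      A (inv (fst r) * p) /\ B (inv (snd r) * p))) (list_prod la lb)) as [lp [L1 L2]].
  { intros r _. destruct (classic (exists p', Q p' /\ A (inv (fst r) * p') /\ B (inv (snd r) * p'))) as [[p' Hp]|Hn].
    - exists p'; split. tauto. intros _; tauto.
    - exists one; split; auto. intro; contradiction. }
  exists lp; split.
  - intros g Hg. destruct (L1 g Hg) as [r [_ [? _]]]; auto.
  - intros x Qx. destruct (HA2 x Qx) as [a [Ha Aa]]. destruct (HB2 x Qx) as [b [Hb Bb]].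
    destruct (L2 (a, b)) as [p [Hp [Qp Hc]]]. apply in_prod; auto.
    simpl in Hc. destruct Hc as [Ap Bp]. exists x; auto.
    exists p; split; auto.
    replace (inv p * x) with (inv (inv a * p) * (inv a * x)) by (gsimpl; reflexivity).
    split; auto.
    replace (inv (inv a * p) * (inv a * x)) with (inv (inv b * p) * (inv b * x)) by (gsimpl; reflexivity).
    auto.
Qed.

Lemma fi_restrict (A P Q : G -> Prop) : is_subgroup G A -> subset G P Q -> P one ->
  finite_index G A Q -> finite_index G A P.
Proof.
  intros [A1 [AM AI]] sPQ P1 [l [H1 H2]].
  destruct (list_choice (fun r p => P p /\ ((exists p', P p' /\ A (inv r * p')) -> A (inv r * p))) l)
    as [lp [L1 L2]].
  { intros r _. destruct (classic (exists p', P p' /\ A (inv r * p'))) as [[p' Hp]|Hn].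
    - exists p'; split. tauto. intros _; tauto.
    - exists one; split; auto. intro; contradiction. }
  exists lp; split.
  - intros g Hg. destruct (L1 g Hg) as [r [_ [? _]]]; auto.
  - intros x Px. destruct (H2 x (sPQ x Px)) as [r [Hr Ar]].
    destruct (L2 r Hr) as [p [Hp [Pp Hc]]]. exists p; split; auto.
    replace (inv p * x) with (inv (inv r * p) * (inv r * x)) by (gsimpl; reflexivity).
    apply AM; auto. apply AI. apply Hc. exists x; auto.
Qed.

Lemma conj_reps (K : G -> Prop) : orbital G K ->
  exists lg, forall g, exists a, In a lg /\ forall y, K (cj g y) <-> K (cj a y).
Proof.
  intros [_ Hopen].
  destruct (compact G (fun U => exists a, U = (fun x => normalizer G K (x * inv a)))) as [l [Hl Hc]].
  - intros U [a ->]. apply open_rmul; auto.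
  - intro x. exists (fun z => normalizer G K (z * inv x)). split. exists x; auto.
    rewrite gVr. intro y. gsimpl. tauto.
  - destruct (list_choice (fun U a => U = (fun x => normalizer G K (x * inv a))) l) as [la [_ L2]].
    { intros U HU. apply Hl; auto. }
    exists la. intro g. destruct (Hc g) as [U [HU Ug]]. destruct (L2 U HU) as [a [Ha ->]].
    exists a; split; auto. intro y.
    specialize (Ug (cj (g * inv a) (cj a y))).
    rewrite cj_cj in Ug. replace (g * inv a * a) with g in Ug by (gsimpl; reflexivity).
    rewrite Ug. unfold cj. gsimpl. tauto.
Qed.

Lemma geq_dec (x y : G) : {x = y} + {x <> y}.
Proof.
  assert (H : exists b : bool, if b then x = y else x <> y).
  { destruct (classic (x = y)). exists true; auto. exists false; auto. }
  apply constructive_indefinite_description in H. destruct H as [[|] H]; auto.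
Qed.

Definition cnt (c : G) (w : list G) : nat := count_occ geq_dec w c.

Section Dietz.
Variable N : G -> Prop.
Hypothesis HNs : is_subgroup G N.
Hypothesis HNn : normal G N.

Definition eqN a b := N (inv a * b).

Lemma eqN_refl a : eqN a a.
Proof. unfold eqN. rewrite gVl. apply HNs. Qed.
Lemma eqN_sym a b : eqN a b -> eqN b a.
Proof. unfold eqN. intro H. destruct HNs as [_ [_ HI]]. apply HI in H. rewrite ginvM, gii in H. auto. Qed.
Lemma eqN_trans a b c : eqN a b -> eqN b c -> eqN a c.
Proof. unfold eqN. intros H1 H2. destruct HNs as [_ [HM _]].
  replace (inv a * c) with ((inv a * b) * (inv b * c)) by (gsimpl; reflexivity). auto. Qed.
Lemma eqN_mul a a' b b' : eqN a a' -> eqN b b' -> eqN (a * b) (a' * b').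
Proof. unfold eqN. intros H1 H2. destruct HNs as [_ [HM _]].
  replace (inv (a * b) * (a' * b')) with (cj (inv b) (inv a * a') * (inv b * b')) by (unfold cj; gsimpl; reflexivity).
  apply HM; auto. apply HNn; auto. Qed.
Lemma eqN_eq a b : a = b -> eqN a b.
Proof. intros ->; apply eqN_refl. Qed.
Lemma eqN_absorb a n : N n -> eqN (a * n) a.
Proof. unfold eqN. intro Hn. destruct HNs as [_ [_ HI]]. rewrite ginvM. gsimpl. auto. Qed.

Variable C : list G.
Variable Kb : nat.
Hypothesis HA : forall c, In c C -> exists k, 1 <= k <= Kb /\ N (prod (repeat c k)).
Hypothesis HB : forall c e, In c C -> In e C -> exists e', In e' C /\ eqN e' (inv c * (e * c)).

Lemma HBpow c (Hc : In c C) m : forall e, In e C -> exists e', In e' C /\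
  eqN e' (inv (prod (repeat c m)) * (e * prod (repeat c m))).
Proof.
  induction m as [|m IH]; intros e He; simpl.
  - exists e; split; auto. apply eqN_eq. gsimpl. reflexivity.
  - destruct (HB c e Hc He) as [e1 [He1 E1]]. destruct (IH e1 He1) as [e' [He' E']].
    exists e'; split; auto. eapply eqN_trans. apply E'.
    eapply eqN_trans. apply eqN_mul. apply eqN_refl. apply eqN_mul. apply E1. apply eqN_refl.
    apply eqN_eq. gsimpl. reflexivity.
Qed.

Lemma move_front c (Hc : In c C) : forall w, incl w C -> exists w', incl w' C /\
  length w' + cnt c w = length w /\ eqN (prod (repeat c (cnt c w) ++ w')) (prod w).
Proof.
  induction w as [|x w IH]; intro Hw.
  - exists nil; simpl; split. intros a []. split; auto. apply eqN_refl.
  - destruct IH as [w' [Iw' [Lw' Ew']]]. intros a Ha; apply Hw; simpl; auto.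
    unfold cnt in *; simpl. destruct (geq_dec x c) as [->|Hne].
    + exists w'; split; auto. split. simpl; lia. simpl. apply eqN_mul. apply eqN_refl. auto.
    + destruct (HBpow c Hc (count_occ geq_dec w c) x (Hw x (or_introl eq_refl))) as [e' [He' Ee']].
      exists (e' :: w'); split. intros a [<-|Ha]; auto. split. simpl; lia.
      rewrite prod_app in *. simpl.
      set (P := prod (repeat c (count_occ geq_dec w c))) in *.
      eapply eqN_trans. apply eqN_mul. apply eqN_refl. apply eqN_mul. apply Ee'. apply eqN_refl.
      eapply eqN_trans. 2:{ apply eqN_mul. apply eqN_refl. apply Ew'. }
      apply eqN_eq. gsimpl. reflexivity.
Qed.

Lemma cnt_cons_ge c x w : cnt c (x :: w) >= cnt c w.
Proof. unfold cnt; simpl. destruct (geq_dec x c); lia. Qed.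
Lemma cnt_cons_eq x w : cnt x (x :: w) = S (cnt x w).
Proof. unfold cnt; simpl. destruct (geq_dec x x); congruence. Qed.
Lemma sum_mono (f g : G -> nat) l : (forall c, f c >= g c) -> list_sum (map f l) >= list_sum (map g l).
Proof. intro H. induction l; simpl. lia. specialize (H a). lia. Qed.

Lemma len_le_sum (w : list G) : incl w C -> length w <= list_sum (map (fun c => cnt c w) C).
Proof.
  induction w as [|x w IH]; intro Hw. simpl; lia. change (S (length w) <= list_sum (map (fun c => cnt c (x :: w)) C)).
  assert (IH' := IH (fun a Ha => Hw a (or_intror Ha))).
  assert (Hx : In x C) by (apply Hw; simpl; auto).
  assert (E : forall l, In x l -> list_sum (map (fun c => cnt c (x :: w)) l) >= S (list_sum (map (fun c => cnt c w) l))).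
  { induction l as [|a l IHl]; intros Hl. destruct Hl. change (list_sum (cnt a (x :: w) :: map (fun c => cnt c (x :: w)) l) >= S (list_sum (cnt a w :: map (fun c => cnt c w) l))). cbn [list_sum fold_right].
    destruct Hl as [->|Hl].
    - rewrite cnt_cons_eq. pose proof (sum_mono (fun c => cnt c (x :: w)) (fun c => cnt c w) l (fun c => cnt_cons_ge c x w)). unfold list_sum in *; lia.
    - specialize (IHl Hl). pose proof (cnt_cons_ge a x w). unfold list_sum in *; lia. }
  specialize (E C Hx). unfold list_sum in *. lia.
Qed.

Lemma sum_le_bound (f : G -> nat) b (l : list G) : (forall c, In c l -> f c <= b) ->
  list_sum (map f l) <= length l * b.
Proof. induction l as [|a l IHl]; intros H. simpl; lia.
  assert (H1 : f a <= b) by (apply H; simpl; auto).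
  assert (H2 : list_sum (map f l) <= length l * b) by (apply IHl; intros; apply H; simpl; auto).
  change (f a + list_sum (map f l) <= S (length l) * b). simpl. lia. Qed.

Lemma shrink w : incl w C -> length w > length C * Kb -> exists w2, incl w2 C /\
  length w2 < length w /\ eqN (prod w2) (prod w).
Proof.
  intros Hw Hlen.
  assert (Hex : exists c, In c C /\ cnt c w >= Kb).
  { apply NNPP; intro Hn.
    assert (list_sum (map (fun c => cnt c w) C) <= length C * Kb).
    { apply sum_le_bound. intros c Hc. apply NNPP; intro H'. apply Hn. exists c; split; auto. lia. }
    pose proof (len_le_sum w Hw). lia. }
  destruct Hex as [c [Hc Hcnt]].
  destruct (HA c Hc) as [k [Hk Nk]].
  destruct (move_front c Hc w Hw) as [w' [Iw' [Lw' Ew']]].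
  exists (repeat c (cnt c w - k) ++ w'); split.
  - intros a Ha. apply in_app_iff in Ha as [Ha|Ha]; auto. apply repeat_spec in Ha; subst; auto.
  - split. rewrite length_app, repeat_length. lia.
    eapply eqN_trans. 2: apply Ew'.
    replace (cnt c w) with ((cnt c w - k) + k) at 2 by lia.
    rewrite repeat_app, !prod_app. apply eqN_sym.
    eapply eqN_trans. apply eqN_mul. apply eqN_absorb. apply Nk. apply eqN_refl. apply eqN_refl.
Qed.

Lemma dietzmann : forall w, incl w C -> exists w', incl w' C /\ length w' <= length C * Kb /\
  eqN (prod w') (prod w).
Proof.
  intro w. remember (length w) as n eqn:En. revert w En.
  induction n as [n IH] using lt_wf_ind. intros w En Hw.
  destruct (le_lt_dec (length w) (length C * Kb)) as [Hle|Hgt].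
  - exists w; split; auto. split. lia. apply eqN_refl.
  - destruct (shrink w Hw Hgt) as [w2 [I2 [L2 E2]]].
    destruct (IH (length w2) ltac:(lia) w2 eq_refl I2) as [w' [? [? ?]]].
    exists w'; split; auto. split; auto. eapply eqN_trans; eauto.
Qed.

End Dietz.

Lemma conj_sub (K : G -> Prop) a : is_subgroup G K -> is_subgroup G (fun y => K (cj a y)).
Proof.
  intros [K1 [KM KI]]. split; [|split].
  - rewrite cj_one; auto.
  - intros x y Hx Hy. rewrite cj_mul; auto.
  - intros x Hx. rewrite cj_inv; auto.
Qed.

Lemma core_sub (K : G -> Prop) l : is_subgroup G K ->
  is_subgroup G (fun y => K y /\ forall a, In a l -> K (cj a y)).
Proof.
  intros HK. pose proof HK as [K1 [KM KI]]. split; [|split].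
  - split; auto. intros a _. rewrite cj_one; auto.
  - intros x y [Hx Hx'] [Hy Hy']. split; auto. intros a Ha. rewrite cj_mul; auto.
  - intros x [Hx Hx']. split; auto. intros a Ha. rewrite cj_inv; auto.
Qed.

Lemma dir1 (hmax : max_condition G) :
  (forall H : G -> Prop, isolated_orbital G H -> normal G H) ->
  (forall K : G -> Prop, orbital G K ->
     exists N : G -> Prop, is_subgroup G N /\ subset G N K /\
       finite_index G N K /\ normal G N).
Proof.
  intros Hi K oK.
  pose proof oK as [[sK cK] nK].
  destruct (hmax (fun M => orbital G M /\ subset G K M /\ finite_index G K M)) as [M [[oM [sKM fKM]] Mmax]].
  - intros H [oH _]. exact (proj1 oH).
  - exists K. split; [exact oK|]. split. intros x; auto. apply fi_refl; auto.
  - assert (isoM : isolated_orbital G M).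
    { split; auto. intros H' oH' sMH' [x [H'x nMx]] fi. apply nMx.
      apply (Mmax H'); auto. split; auto. split. intros y Ky; apply sMH', sKM; auto.
      eapply fi_trans. apply (proj1 (proj1 oH')). apply sMH'. apply fKM. apply fi. }
    pose proof (Hi M isoM) as nM.
    pose proof oM as [[sM _] _].
    destruct (conj_reps K oK) as [lg Hlg].
    exists (fun y => K y /\ forall a, In a lg -> K (cj a y)).
    split; [apply core_sub; auto|]. split; [intros y [Hy _]; auto|]. split.
    + assert (fKa : forall a, finite_index G (fun y => K (cj a y)) M).
      { intro a. destruct fKM as [l [A B]]. exists (map (cj (inv a)) l). split.
        - intros g' Hg'. apply in_map_iff in Hg' as [g [<- Hg]]. apply nM. auto.
        - intros x Mx. destruct (B (cj a x) (nM a x Mx)) as [g [Hg Kg]].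
          exists (cj (inv a) g). split. apply in_map; auto.
          replace (cj a (inv (cj (inv a) g) * x)) with (inv g * cj a x) by (unfold cj; gsimpl; reflexivity).
          auto. }
      assert (fl : forall l, finite_index G (fun y => K y /\ forall a, In a l -> K (cj a y)) M).
      { induction l as [|a l IH].
        - eapply fi_ext. apply fKM. intro x; simpl; split; [intro; split; auto; intros _ []|tauto].
        - eapply fi_ext. apply (fi_inter _ _ M (core_sub K l sK) (conj_sub K a sK) (proj1 sM) IH (fKa a)).
          intro x; simpl; split.
          + intros [[Kx Hl] Ka]. split; auto. intros b [<-|Hb]; auto.
          + intros [Kx Hl]. split; auto. }
      eapply fi_restrict. apply core_sub; auto. apply sKM. apply sK. apply fl.
    + intros g y [Ky Hy]. split.
      * destruct (Hlg g) as [a [Ha Ea]]. apply Ea. apply Hy; auto.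
      * intros a Ha. change (K (cj a (cj g y))). rewrite cj_cj.
        destruct (Hlg (a * g)) as [b [Hb Eb]]. apply Eb. apply Hy; auto.
Qed.

Fixpoint allwords (C : list G) (n : nat) : list (list G) :=
  match n with
  | 0 => [nil]
  | S n => nil :: flat_map (fun c => map (cons c) (allwords C n)) C
  end.

Lemma allwords_in C n : forall w, incl w C -> length w <= n -> In w (allwords C n).
Proof.
  induction n as [|n IH]; intros w Hw Hl.
  - destruct w; simpl in *; [auto|lia].
  - destruct w as [|x w]; simpl; auto. right. apply in_flat_map. exists x. split.
    apply Hw; simpl; auto. apply in_map. apply IH. intros a Ha; apply Hw; simpl; auto. simpl in Hl; lia.
Qed.

Lemma allwords_incl C n : forall w, In w (allwords C n) -> incl w C.
Proof.
  induction n as [|n IH]; intros w Hw; simpl in Hw.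
  - destruct Hw as [<-|[]]. intros a [].
  - destruct Hw as [<-|Hw]. intros a [].
    apply in_flat_map in Hw as [c [Hc Hw]]. apply in_map_iff in Hw as [w' [<- Hw']].
    intros a [<-|Ha]; auto. apply (IH w'); auto.
Qed.

Lemma nodup_map_seq (f : nat -> G) m : forall a,
  (forall i j, a <= i -> i < j -> j < a + m -> f i <> f j) -> NoDup (map f (seq a m)).
Proof.
  induction m as [|m IH]; intros a H; simpl. constructor.
  constructor.
  - intro Hin. apply in_map_iff in Hin as [j [Ej Hj]]. apply in_seq in Hj.
    apply (H a j); auto; lia.
  - apply IH. intros i j ? ? ?. apply H; lia.
Qed.

Lemma finite_order (N H : G -> Prop) (lH : list G) : is_subgroup G N -> is_subgroup G H ->
  (forall x, H x -> exists g, In g lH /\ N (inv g * x)) ->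
  forall t, H t -> exists k, 1 <= k <= length lH /\ N (prod (repeat t k)).
Proof.
  intros sN [H1 [HM HI]] Hcov t Ht.
  assert (Hp : forall i, H (prod (repeat t i))).
  { induction i; simpl; auto. }
  assert (Hf : forall i, exists r, In r lH /\ N (inv r * prod (repeat t i))).
  { intro i. apply Hcov; auto. }
  destruct (functional_choice _ Hf) as [f Hfx].
  destruct (classic (exists i j, i < j <= length lH /\ f i = f j)) as [[i [j [Hij Eij]]]|Hn].
  - exists (j - i). split. lia.
    assert (E : eqN N (prod (repeat t i)) (prod (repeat t j))).
    { eapply eqN_trans; auto. apply eqN_sym; auto. apply (proj2 (Hfx i)).
      rewrite Eij. apply (proj2 (Hfx j)). }
    unfold eqN in E. replace j with (i + (j - i)) in E by lia.
    rewrite repeat_app, prod_app in E. rewrite gA, gVl, g1l in E. auto.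
  - exfalso.
    assert (ND : NoDup (map f (seq 0 (S (length lH))))).
    { apply nodup_map_seq. intros i j ? ? ? E. apply Hn. exists i, j. split; auto. lia. }
    apply NoDup_incl_length with (l' := lH) in ND.
    + rewrite length_map, length_seq in ND. lia.
    + intros r Hr. apply in_map_iff in Hr as [i [<- _]]. apply (proj1 (Hfx i)).
Qed.

Lemma dir2 :
  (forall K : G -> Prop, orbital G K ->
     exists N : G -> Prop, is_subgroup G N /\ subset G N K /\
       finite_index G N K /\ normal G N) ->
  (forall H : G -> Prop, isolated_orbital G H -> normal G H).
Proof.
  intros Hii H [oH Hiso].
  destruct (Hii H oH) as [N [sN [sNH [[lH [lH_in lH_cov]] nN]]]].
  pose proof oH as [[sH cH] nH].
  pose proof sH as [H1 [HM HI]].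
  pose proof sN as [N1 [NM NI]].
  destruct (conj_reps H oH) as [lg Hlg].
  set (X := fun x => exists g h, H h /\ x = cj g h).
  set (C := flat_map (fun a => map (fun t => cj (inv a) t) lH) lg).
  assert (X_rep : forall x, X x -> exists c, In c C /\ eqN N c x).
  { intros x [g [h [Hh ->]]]. destruct (Hlg (inv g)) as [a [Ha Ea]].
    assert (Hh' : H (cj a (cj g h))).
    { apply Ea. rewrite cj_cj. replace (inv g * g) with one by (gsimpl; reflexivity). rewrite cj_1; auto. }
    destruct (lH_cov _ Hh') as [t [Ht Nt]].
    exists (cj (inv a) t). split.
    - apply in_flat_map. exists a. split; auto. apply in_map_iff. exists t; auto.
    - unfold eqN.
      replace (inv (cj (inv a) t) * cj g h) with (cj (inv a) (inv t * cj a (cj g h)))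
        by (unfold cj; gsimpl; reflexivity).
      apply nN; auto. }
  assert (C_X : forall c, In c C -> X c).
  { intros c Hc. apply in_flat_map in Hc as [a [Ha Hc]]. apply in_map_iff in Hc as [t [<- Ht]].
    exists (inv a), t. split; auto. }
  assert (X_cj : forall g x, X x -> X (cj g x)).
  { intros g x [g' [h [Hh ->]]]. exists (g * g'), h. split; auto. apply cj_cj. }
  assert (HA : forall c, In c C -> exists k, 1 <= k <= length lH /\ N (prod (repeat c k))).
  { intros c Hc. apply in_flat_map in Hc as [a [Ha Hc]]. apply in_map_iff in Hc as [t [<- Ht]].
    destruct (finite_order N H lH sN sH lH_cov t (lH_in t Ht)) as [k [Hk Nk]].
    exists k; split; auto. rewrite prod_repeat_cj. apply nN; auto. }
  assert (HB : forall c e, In c C -> In e C -> exists e', In e' C /\ eqN N e' (inv c * (e * c))).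
  { intros c e Hc He. apply X_rep.
    replace (inv c * (e * c)) with (cj (inv c) e) by (unfold cj; gsimpl; reflexivity).
    apply X_cj, C_X; auto. }
  set (L := fun y => exists w, (forall x, In x w -> X x) /\ prod w = y).
  assert (sL : is_subgroup G L).
  { split; [|split].
    - exists nil; split; auto. intros x [].
    - intros x y [w1 [H1w <-]] [w2 [H2w <-]]. exists (w1 ++ w2). split.
      intros z Hz; apply in_app_iff in Hz as [?|?]; auto. apply prod_app.
    - intros x [w [Hw <-]]. exists (rev (map inv w)). split. 2: apply prod_rev_inv.
      intros z Hz. apply in_rev in Hz. apply in_map_iff in Hz as [y [<- Hy]].
      destruct (Hw y Hy) as [g [h [Hh ->]]]. exists g, (inv h). split; auto. rewrite cj_inv; auto. }
  assert (nL : normal G L).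
  { intros g x [w [Hw <-]]. exists (map (cj g) w). split. 2: apply prod_cj.
    intros z Hz. apply in_map_iff in Hz as [y [<- Hy]]. apply X_cj; auto. }
  assert (HL : subset G H L).
  { intros h Hh. exists [h]. split. intros x [<-|[]]. exists one, h. split; auto. rewrite cj_1; auto.
    simpl. apply g1r. }
  assert (toC : forall w, (forall x, In x w -> X x) -> exists wc, incl wc C /\ eqN N (prod wc) (prod w)).
  { induction w as [|x w IH]; intro Hw.
    - exists nil. split. intros a []. apply eqN_refl; auto.
    - destruct IH as [wc [Iwc Ewc]]. intros; apply Hw; simpl; auto.
      destruct (X_rep x (Hw x (or_introl eq_refl))) as [c [Hc Ec]].
      exists (c :: wc). split. intros a [<-|Ha]; auto. simpl. apply eqN_mul; auto. }
  set (W0 := map prod (allwords C (length C * length lH))).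
  assert (W0_L : forall w0, In w0 W0 -> L w0).
  { intros w0 Hw0. apply in_map_iff in Hw0 as [w [<- Hw]]. exists w. split; auto.
    intros x Hx. apply C_X. apply (allwords_incl C _ w Hw); auto. }
  assert (L_cov : forall y, L y -> exists w0, In w0 W0 /\ H (inv w0 * y)).
  { intros y [w [Hw <-]]. destruct (toC w Hw) as [wc [Iwc Ewc]].
    destruct (dietzmann N sN nN C (length lH) HA HB wc Iwc) as [w' [Iw' [Lw' Ew']]].
    exists (prod w'). split. apply in_map. apply allwords_in; auto.
    apply sNH. apply (eqN_trans N sN _ _ _ Ew' Ewc). }
  assert (oL : orbital G L).
  { split. split; auto.
    - unfold is_closed.
      eapply open_ext. apply (open_forall_list (fun w x => ~ H (inv w * x)) W0).
      + intros w _. apply (open_lmul (fun z => ~ H z)). apply cH.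
      + intro x; split.
        * intros Hx Lx. destruct (L_cov x Lx) as [w0 [Hw0 Hh]]. apply (Hx w0 Hw0 Hh).
        * intros nLx w Hw Hh. apply nLx.
          replace x with (w * (inv w * x)) by (gsimpl; reflexivity).
          apply (proj1 (proj2 sL)). apply W0_L; auto. apply HL; auto.
    - eapply open_ext. apply open_full. intro g; split; auto. intros _ x. split.
      + intro Lx. replace (inv g * (x * g)) with (cj (inv g) x) by (unfold cj; gsimpl; reflexivity). apply nL; auto.
      + intro Lx. pose proof (nL g _ Lx) as Lx2. clear Lx. rename Lx2 into Lx. unfold cj in Lx.
        replace (g * (inv g * (x * g) * inv g)) with x in Lx by (gsimpl; reflexivity). auto. }
  assert (fHL : finite_index G H L).
  { exists W0. split; auto. }
  assert (noext : ~ exists x, L x /\ ~ H x).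
  { intro Hex. apply (Hiso L oL HL Hex fHL). }
  intros g x Hx. apply NNPP. intro Hn. apply noext. exists (cj g x). split; auto. apply nL. apply HL; auto.
Qed.

End Aux.

Theorem lemma1p13 (G : ProfiniteGroup) (hmax : max_condition G) :
  (forall H : G -> Prop, isolated_orbital G H -> normal G H) <->
  (forall K : G -> Prop, orbital G K ->
     exists N : G -> Prop, is_subgroup G N /\ subset G N K /\
       finite_index G N K /\ normal G N).
Proof.
  split. apply dir1; auto. apply dir2.
Qed.
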